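(* Let $E$, $v$ and $f_T$ be as described in the context. Then, for $s\in(0,\frac{\alpha}{2})$, \begin{equation*} a_{ij}(x)\partial_{ij}(\Delta_e^sv(x))\geq F_s(x),\ \ \ \ \forall x\in\mathbb{R}^n,\ e\in E\setminus\{0\}, \end{equation*} where $a_{ij}(x)=cof_{ij}(D^2v(x))$ (the algebraic cofactor of the $(i,j)$ entry of $D^2v(x)$) and \begin{equation*} F_s(x):=n\left(\det(D^2v(x))^{\frac{n-1}{n}}\right)\left(\frac{f_T^{\frac{1}{n}}(x+e)+f_T^{\frac{1}{n}}(x-e)-2f_T^{\frac{1}{n}}(x)}{|e|^{2s}}\right). \end{equation*}
   Context: Setting: $\alpha\in(0,1)$; $f_p$ is a positive periodic function on $\mathbb{R}^n$ with $d_0^{-1}\leq f_p\leq d_0$, $[f_p]_{C^\alpha(\mathbb{R}^n)}\leq d_0$, and (after normalization) $f_p(x+e_i)=f_p(x)$ for the standard basis vectors $e_i$. $u$ is a convex solution of $\det(D^2u)=f$ in $\mathbb{R}^n$ (with $f$ a $C^\alpha$ perturbation of $f_p$ decaying at infinity), which after modification on a compact set is assumed $C^{2,\alpha}_{loc}(\mathbb{R}^n)$ with $f\in C^\alpha(\mathbb{R}^n)$. $T$ is a linear transform with $\det T=1$ such that $|u(Tx)-\frac12|x|^2|\leq c_0|x|^{2-\theta}$ for $|x|\geq1$. Set $v=u\circ T$, $f_T(x)=f(T(x))$, $(f_p)_T(x)=f_p(T(x))$, so that $\det(D^2v)=f_T$ in $\mathbb{R}^n$ and $v\in C^2$ with $c_1I\leq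 D^2v\leq c_2I$ for positive constants $c_1,c_2$. Let $p_i:=T^{-1}e_i$, so $(f_p)_T(x+p_i)=(f_p)_T(x)$, and $E:=\{k_1p_1+\cdots+k_np_n:\ k_1,\dots,k_n\in\mathbb{Z}\}$. For $e\in\mathbb{R}^n\setminus\{0\}$ and $s\in(0,1)$, the $2s$-order increment is $\Delta_e^sv(x):=\frac{v(x+e)+v(x-e)-2v(x)}{|e|^{2s}}$. Summation over repeated indices $i,j$ is implied. *)

(* Defs.v *)
From HB Require Import structures.
From mathcomp Require Import all_boot all_order all_algebra.
From mathcomp Require Import all_classical all_reals all_analysis.
Set Implicit Arguments. Unset Strict Implicit. Unset Printing Implicit Defensive.
Import Order.TTheory GRing.Theory Num.Theory.
Import numFieldNormedType.Exports.
Local Open Scope ring_scope.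

Section Defs.
Variables (R : realType) (n : nat).
Local Notation V := 'rV[R]_n.

Definition basis_vec (i : 'I_n) : V := delta_mx 0 i.

Definition partial (f : V -> R) (i : 'I_n) : V -> R :=
  fun x => derive f x (basis_vec i).

Definition hessian (f : V -> R) (x : V) : 'M[R]_n :=
  \matrix_(i, j) partial (partial f j) i x.

Definition C2 (f : V -> R) : Prop :=
  (forall x i, derivable f x (basis_vec i)) /\
  (forall x i j, derivable (partial f j) x (basis_vec i)) /\
  (forall i j, continuous (partial (partial f j) i)).

Definition enorm (x : V) : R := Num.sqrt (\sum_i x 0 i ^+ 2).

Definition qform (A : 'M[R]_n) (xi : V) : R := (xi *m A *m xi^T) 0 0.
Definition sqnorm (xi : V) : R := \sum_i xi 0 i ^+ 2.

Definition incr (s : R) (e : V) (v : V -> R) : V -> R :=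
  fun x => (v (x + e) + v (x - e) - 2 * v x) / powR (enorm e) (2 * s).

(* the lattice E = { k_1 p_1 + ... + k_n p_n : k_i in Z }, p_i = T^{-1} e_i
   (with the linear map x |-> x *m T on row vectors, T^{-1} e_i = e_i *m invmx T) *)
Definition lattice (T : 'M[R]_n) : set V :=
  [set y | exists k : 'I_n -> int, y = \sum_i (k i)%:~R *: (basis_vec i *m invmx T)].

End Defs.

Arguments basis_vec {R n}.
Arguments partial {R n}.
Arguments hessian {R n}.
Arguments C2 {R n}.
Arguments enorm {R n}.
Arguments qform {R n}.
Arguments sqnorm {R n}.
Arguments incr {R n}.
Arguments lattice {R n}.

(* Main.v *)
Require Import Defs.
From HB Require Import structures.
From mathcomp Require Import all_boot all_order all_algebra.
From mathcomp Require Import all_classical all_reals all_analysis.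
From mathcomp Require Import ring.
Import Order.TTheory GRing.Theory Num.Theory.
Import numFieldNormedType.Exports.
Local Open Scope ring_scope.
Local Open Scope classical_set_scope.

Lemma dq_line (R : realType) (n : nat) (f : 'rV[R]_n -> R) (y w : 'rV[R]_n) (t : R) :
  (fun h : R => h^-1 *: (((fun s : R => f (y + s *: w)) \o shift t) (h *: 1) - f (y + t *: w)))
  = (fun h : R => h^-1 *: ((f \o shift (y + t *: w)) (h *: w) - f (y + t *: w))).
Proof.
apply/funext => h /=; congr (_ *: (f _ - _)).
by rewrite [h *: 1]mulr1 scalerDl addrCA addrC.
Qed.

Lemma derive_line (R : realType) (n : nat) (f : 'rV[R]_n -> R) (y w : 'rV[R]_n) (t : R) :
  derive (fun s : R => f (y + s *: w)) t 1 = derive f (y + t *: w) w.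
Proof. by rewrite /derive dq_line. Qed.

Lemma derivable_line (R : realType) (n : nat) (f : 'rV[R]_n -> R) (y w : 'rV[R]_n) (t : R) :
  derivable (fun s : R => f (y + s *: w)) t 1 <-> derivable f (y + t *: w) w.
Proof. by rewrite /derivable dq_line. Qed.

Lemma mvt_line (R : realType) (n : nat) (g : 'rV[R]_n -> R) (y w : 'rV[R]_n) (h : R) :
  0 < h -> (forall z, derivable g z w) ->
  exists2 t, 0 <= t <= h & g (y + h *: w) - g y = derive g (y + t *: w) w * h.
Proof.
move=> h0 dg.
have dl : forall t, derivable (fun s : R => g (y + s *: w)) t 1.
  by move=> t; apply/derivable_line.
have [t tI E] := @MVT R (fun s : R => g (y + s *: w))
   (fun t => derive (fun s : R => g (y + s *: w)) t 1) 0 h h0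
   (fun t _ => derivableP (dl t)) (derivable_within_continuous (fun t _ => dl t)).
exists t; first by move: tI; rewrite in_itv /= => /andP[/ltW -> /ltW ->].
by move: E; rewrite scale0r addr0 subr0 derive_line.
Qed.
Lemma dq_shift (R : realType) (n : nat) (f : 'rV[R]_n -> R) (e x w : 'rV[R]_n) :
  (fun h : R => h^-1 *: (((fun y => f (y + e)) \o shift x) (h *: w) - f (x + e)))
  = (fun h : R => h^-1 *: ((f \o shift (x + e)) (h *: w) - f (x + e))).
Proof. by apply/funext => h /=; rewrite addrA. Qed.

Lemma derive_shift (R : realType) (n : nat) (f : 'rV[R]_n -> R) (e x w : 'rV[R]_n) :
  derive (fun y => f (y + e)) x w = derive f (x + e) w.
Proof. by rewrite /derive dq_shift. Qed.

Lemma derivable_shift (R : realType) (n : nat) (f : 'rV[R]_n -> R) (e x w : 'rV[R]_n) :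
  derivable (fun y => f (y + e)) x w <-> derivable f (x + e) w.
Proof. by rewrite /derivable dq_shift. Qed.

Lemma mvt2 (R : realType) (n : nat) (f : 'rV[R]_n -> R) (x a b : 'rV[R]_n) (h : R) :
  0 < h -> (forall y, derivable f y a) ->
  (forall y, derivable (fun z => derive f z a) y b) ->
  exists t, exists s, [/\ 0 <= t <= h, 0 <= s <= h &
    f (x + h *: a + h *: b) - f (x + h *: a) - f (x + h *: b) + f x
    = derive (fun z => derive f z a) (x + t *: a + s *: b) b * h * h].
Proof.
move=> h0 da db.
pose g := fun y => f (y + h *: b) - f y.
have dg : forall z, derivable g z a.
  move=> z; apply: derivableB => //.
  by apply/derivable_shift.
have [t tI Et] := @mvt_line _ _ g x a h h0 dg.
have [s sI Es] := @mvt_line _ _ _ (x + t *: a) b h h0 db.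
exists t, s; split => //.
move: Et; rewrite /= => Et.
have Dg : derive g (x + t *: a) a = derive f (x + t *: a + h *: b) a - derive f (x + t *: a) a.
  rewrite deriveB //; last by apply/derivable_shift.
  by rewrite derive_shift.
rewrite Dg Es /g in Et; rewrite -Et.
by rewrite opprD opprK addrA.
Qed.

Definition comb {R : realType} {n : nat} (c : R) (e : 'rV[R]_n) (g : 'rV[R]_n -> R) :=
  fun y => (g (y + e) + g (y - e) - 2 * g y) / c.

Lemma derive_comb (R : realType) (n : nat) (c : R) (e : 'rV[R]_n) (g : 'rV[R]_n -> R) x w :
  (forall y, derivable g y w) ->
  derivable (comb c e g) x w /\
  derive (comb c e g) x w = comb c e (fun y => derive g y w) x.
Proof.
move=> dg.
pose F1 := fun y => g (y + e). pose F2 := fun y => g (y + - e).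
have d1 : derivable F1 x w by apply/derivable_shift.
have d2 : derivable F2 x w := (derivable_shift _ _ g (- e) x w).2 (dg _).
have d3 : derivable (2 \*: g) x w := @derivableZ _ _ _ g 2 x w (dg x).
have d12 : derivable (F1 + F2) x w := derivableD d1 d2.
have d123 : derivable (F1 + F2 - 2 \*: g) x w := derivableB d12 d3.
have DG : derive (F1 + F2 - 2 \*: g) x w = derive g (x + e) w + derive g (x - e) w - 2 * derive g x w.
  rewrite (deriveB d12 d3) (deriveD d1 d2) (deriveZ 2 (dg x)).
  by rewrite /F1 /F2 !derive_shift.
have EC : comb c e g = c^-1 \*: (F1 + F2 - 2 \*: g).
  by apply/funext => y /=; rewrite /comb mulrC.
rewrite EC; split; first exact: (@derivableZ _ _ _ _ c^-1 x w d123).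
rewrite (deriveZ c^-1 d123) DG /comb.
exact: mulrC.
Qed.

Lemma near_ball (R : realType) (n : nat) (F : 'rV[R]_n -> R) (x : 'rV[R]_n) e :
  continuous F -> 0 < e ->
  exists2 d, 0 < d & forall y, `|x - y| < d -> `|F x - F y| < e.
Proof.
move=> Fc e0.
have := Fc x; move/cvgrPdist_lt => /(_ e e0).
by move/nbhs_normP => [d d0 Hd]; exists d => // y xy; apply: (Hd y).
Qed.

Lemma clairaut_gen (R : realType) (n : nat) (f : 'rV[R]_n -> R) (x a b : 'rV[R]_n) :
  (forall y, derivable f y a) -> (forall y, derivable f y b) ->
  (forall y, derivable (fun z => derive f z a) y b) ->
  (forall y, derivable (fun z => derive f z b) y a) ->
  continuous (fun y => derive (fun z => derive f z a) y b) ->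
  continuous (fun y => derive (fun z => derive f z b) y a) ->
  derive (fun z => derive f z a) x b = derive (fun z => derive f z b) x a.
Proof.
move=> da db dab dba c1 c2.
set F1 := fun y => derive (fun z => derive f z a) y b.
set F2 := fun y => derive (fun z => derive f z b) y a.
rewrite -/(F1 x) -/(F2 x).
apply/eqP; rewrite -subr_eq0 -normr_le0; apply/ler_addgt0Pr => e e0.
rewrite add0r.
have e2 : 0 < e / 2 by rewrite divr_gt0.
have [d1 d10 H1] := near_ball _ _ _ x _ c1 e2.
have [d2 d20 H2] := near_ball _ _ _ x _ c2 e2.
pose d := Num.min d1 d2.
have ge_min_l0 : d <= d1 by rewrite /d ge_min lexx.
have ge_min_r0 : d <= d2 by rewrite /d ge_min lexx orbT.
have d0 : 0 < d by rewrite lt_min d10 d20.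
pose h := d / (2 * (`|a| + `|b| + 1)).
have K0 : 0 < `|a| + `|b| + 1 by rewrite ltr_wpDl // addr_ge0.
have h0 : 0 < h by rewrite divr_gt0 // mulr_gt0.
have small : forall t s, 0 <= t <= h -> 0 <= s <= h -> `|x - (x + t *: a + s *: b)| < d.
  move=> t s /andP[t0 th] /andP[s0 sh].
  rewrite -addrA opprD addrA subrr add0r normrN.
  apply: (le_lt_trans (ler_normD _ _)); rewrite !normrZ (ger0_norm t0) (ger0_norm s0).
  have : t * `|a| + s * `|b| <= h * (`|a| + `|b| + 1).
    rewrite mulrDr mulrDr mulr1 -addrA.
    apply: lerD; first by rewrite ler_wpM2r.
    apply: ler_wpDr; first exact: ltW.
    by rewrite ler_wpM2r.
  move/le_lt_trans; apply.
  rewrite /h invfM mulrA mulfVK; last by rewrite gt_eqF.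
  by rewrite ltr_pdivrMr // ltr_pMr // ltr1n.
clearbody h.
have [t1 [s1 [t1I s1I E1]]] := mvt2 _ _ _ x _ _ _ h0 da dab.
have [t2 [s2 [t2I s2I E2]]] := mvt2 _ _ _ x _ _ _ h0 db dba.
have cancel_lem : forall p q p' q' r : R, p = q * r * r -> p' = q' * r * r -> p = p' -> r != 0 -> q = q'.
  move=> p q p' q' r -> -> E r0.
  by apply: (mulIf r0); apply: (mulIf r0).
have Delta : f (x + h *: a + h *: b) - f (x + h *: a) - f (x + h *: b) + f x =
             f (x + h *: b + h *: a) - f (x + h *: b) - f (x + h *: a) + f x.
  rewrite [x + h *: b + h *: a]addrAC; congr (_ + _); rewrite -!addrA; congr (_ + _); exact: addrC.
have EQ := cancel_lem _ _ _ _ _ E1 E2 Delta (lt0r_neq0 h0).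
have A1 : `|F1 x - F1 (x + t1 *: a + s1 *: b)| < e / 2.
  exact: H1 (lt_le_trans (small _ _ t1I s1I) ge_min_l0).
have A2 : `|F2 x - F2 (x + t2 *: b + s2 *: a)| < e / 2.
  apply: H2; rewrite [x + t2 *: b + s2 *: a]addrAC.
  exact: (lt_le_trans (small _ _ s2I t2I) ge_min_r0).
have -> : F1 x - F2 x = (F1 x - F1 (x + t1 *: a + s1 *: b)) - (F2 x - F2 (x + t2 *: b + s2 *: a)).
  by rewrite /F1 /F2 EQ opprB addrA subrK.
apply: (le_trans (ler_normB _ _)).
rewrite [e in X in _ <= X]splitr.
apply: lerD.
exact: ltW A1.
exact: ltW A2.
Qed.


Definition pdmx {R : realFieldType} {n : nat} (A : 'M[R]_n) :=
  forall x : 'rV[R]_n, x != 0 -> 0 < (x *m A *m x^T) 0 0.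

Lemma block_split {R : realFieldType} {n : nat} (A : 'M[R]_(1 + n)) :
  exists a11 b c A', A = block_mx a11 b c A'.
Proof. by exists (ulsubmx A), (ursubmx A), (dlsubmx A), (drsubmx A); rewrite submxK. Qed.

Lemma diag_mx11 {R : realFieldType} (a : R) : diag_mx (a%:M : 'rV[R]_1) = a%:M.
Proof. by apply/matrixP => i j; rewrite !mxE !ord1 eqxx. Qed.

Lemma LDL {R : realFieldType} {n : nat} (A : 'M[R]_n) : A^T = A -> pdmx A ->
  exists L, exists d : 'rV[R]_n, [/\ \det L = 1, forall i, 0 < d 0 i,
     forall i, d 0 i <= A i i & A = L *m diag_mx d *m L^T].
Proof.
elim: n A => [|n IH] A sA pA.
  exists 1%:M, 0; split; first exact: det1.
  - by case.
  - by case.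
  - by apply/matrixP => -[].
have [a11 [b [c [A' EA]]]] := block_split (A : 'M[R]_(1 + n)).
move: sA pA; rewrite EA => {EA A} sA pA.
suff H : exists (L : 'M[R]_(1 + n)) (d : 'rV[R]_(1 + n)), [/\ \det L = 1, forall i, 0 < d 0 i,
   forall i, d 0 i <= (block_mx a11 b c A' : 'M[R]_(1 + n)) i i &
   (block_mx a11 b c A' : 'M[R]_(1 + n)) = L *m diag_mx d *m L^T] by exact: H.
have sA2 : (block_mx a11 b c A')^T = block_mx a11 b c A' :> 'M[R]_(1 + n) := sA.
have {}pA : forall x : 'rV[R]_(1 + n), x != 0 -> 0 < (x *m block_mx a11 b c A' *m x^T) 0 0 := pA.
move: sA2; rewrite tr_block_mx => /eq_block_mx [s11 cb bc sA'].
have E11 := mx11_scalar a11; set a := a11 0 0 in E11.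
have a0 : 0 < a.
  have x0 : row_mx (1%:M : 'rV[R]_1) (0 : 'rV[R]_n) != 0.
    by rewrite row_mx_eq0 negb_and oner_eq0.
  have := pA _ x0; rewrite mul_row_block !mul0mx !addr0 !mul1mx tr_row_mx mul_row_col.
  by rewrite trmx0 mulmx0 addr0 trmx1 mulmx1.
pose S := A' - a^-1 *: (c *m b).
have sS : S^T = S.
  by rewrite /S linearB /= linearZ /= trmx_mul sA' bc -cb.
have pS : pdmx S.
  move=> y y0.
  pose t := - a^-1 *: (y *m c).
  have x0 : row_mx t y != 0 by rewrite row_mx_eq0 negb_and y0 orbT.
  have := pA _ x0.
  rewrite mul_row_block tr_row_mx mul_row_col E11 mul_mx_scalar.
  have -> : a *: t + y *m c = 0.
    by rewrite /t scalerA mulrN mulfV ?gt_eqF // scaleN1r addNr.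
  rewrite mul0mx add0r mulmxDl /S mulmxBr mulmxBl /t -!scalemxAl -!scalemxAr.
  rewrite !scaleNr !mulmxA -scalemxAl.
  by rewrite addrC.
have [L1 [d1 [dL1 d1p d1le ES]]] := IH S sS pS.
pose L : 'M[R]_(1 + n) := block_mx 1%:M 0 (a^-1 *: c) L1.
pose d : 'rV[R]_(1 + n) := row_mx (a%:M : 'rV[R]_1) d1.
have E : L *m diag_mx d *m L^T = block_mx a11 b c A'.
  rewrite /L /d diag_mx_row diag_mx11 mulmx_block tr_block_mx mulmx_block.
  rewrite !mulmx0 !mul0mx !addr0 !add0r mul1mx mul_mx_scalar.
  rewrite trmx1 trmx0 !mulmx0 !mul0mx !addr0 !mulmx1 scalerA mulfV ?gt_eqF // scale1r.
  rewrite linearZ /= cb -ES mul_scalar_mx scalerA mulfV ?gt_eqF // scale1r.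
  rewrite -scalemxAr /S E11.
  by rewrite addrC subrK.
exists L, d; split.
- by rewrite /L (det_lblock (1%:M : 'M[R]_1)) det1 dL1 mulr1.
- move=> i; have [k ->|k ->] := split_ordP (i : 'I_(1 + n)).
    by rewrite /d row_mxEl mxE ord1 eqxx mulr1n.
  by rewrite /d row_mxEr.
- move=> i; have [k ->|k ->] := split_ordP (i : 'I_(1 + n)).
    by rewrite /d row_mxEl block_mxEul E11 !mxE ord1 eqxx.
  rewrite /d row_mxEr block_mxEdr; apply: (le_trans (d1le k)).
  rewrite /S !mxE big_ord1 -cb mxE lerBlDr lerDl.
  apply: mulr_ge0; first by rewrite invr_ge0 ltW.
  by rewrite -expr2 sqr_ge0.
- by rewrite E.
Qed.

Lemma trace_red {R : realFieldType} {n : nat} (A B L M : 'M[R]_n) (d : 'rV[R]_n) :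
  \det L = 1 -> (forall i, 0 < d 0 i) -> A = L *m diag_mx d *m L^T ->
  B = L *m M *m L^T ->
  \tr (\adj A *m B) = \sum_i \det A / d 0 i * M i i.
Proof.
move=> dL dpos EA EB.
have Lu : L \in unitmx by rewrite unitmxE dL unitr1.
have Du : diag_mx d \in unitmx.
  by rewrite unitmxE det_diag unitfE gt_eqF // prodr_gt0.
pose N := L^T *m \adj A *m L.
have DN : diag_mx d *m N = (\det A)%:M.
  have H : invmx L *m (A *m \adj A) *m L = (\det A)%:M.
    by rewrite mul_mx_adj mul_mx_scalar -scalemxAl mulVmx // scalemx1.
  rewrite -H {1}EA /N !mulmxA.
  by rewrite mulVmx // mul1mx.
have NE : N = diag_mx (\row_i (\det A / d 0 i)).
  apply: (can_inj (mulKmx Du)); rewrite DN mul_diag_mx.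
  apply/matrixP => i j; rewrite !mxE.
  case: (eqVneq i j) => [->|ij]; last by rewrite !mulr0n mulr0.
  by rewrite !mulr1n mulrCA divff ?gt_eqF // mulr1.
rewrite EB !mulmxA mxtrace_mulC !mulmxA -/N NE mul_diag_mx /mxtrace.
by apply: eq_bigr => i _; rewrite !mxE.
Qed.

Lemma key_ineq {R : realFieldType} {n : nat} (A B : 'M[R]_n) (a b : R) :
  (0 < n)%N -> A^T = A -> B^T = B -> pdmx A -> pdmx B -> 0 < a -> 0 <= b ->
  a ^+ n = \det A -> b ^+ n = \det B ->
  n%:R * a ^+ n.-1 * b <= \tr (\adj A *m B).
Proof.
move=> n0 sA sB pA pB a0 b0 Ea Eb.
have [L [d [dL dpos _ EA]]] := LDL A sA pA.
have Lu : L \in unitmx by rewrite unitmxE dL unitr1.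
pose iL := invmx L.
pose M := iL *m B *m iL^T.
have EB : B = L *m M *m L^T.
  rewrite /M !mulmxA mulmxV // mul1mx -mulmxA -trmx_mul mulmxV // trmx1 mulmx1.
  by [].
have sM : M^T = M by rewrite /M !trmx_mul trmxK sB mulmxA.
have pM : pdmx M.
  move=> x x0.
  have y0 : x *m iL != 0.
    by apply: contra x0 => /eqP H; rewrite -[x](mulmxKV Lu) -/iL H mul0mx.
  suff -> : x *m M *m x^T = x *m iL *m B *m (x *m iL)^T by exact: pB.
  by rewrite /M trmx_mul !mulmxA.
have [L' [d' [dL' d'pos d'le EM]]] := LDL M sM pM.
have detM : \det M = \det B.
  by rewrite /M !det_mulmx det_tr det_inv dL invr1 mul1r mulr1.
have detM' : \det M = \prod_i d' 0 i.
  by rewrite EM !det_mulmx det_tr dL' mul1r mulr1 det_diag.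
have detA : \det A = \prod_i d 0 i.
  by rewrite EA !det_mulmx det_tr dL mul1r mulr1 det_diag.
rewrite (trace_red _ _ _ _ _ dL dpos EA EB).
pose E i := M i i / d 0 i.
have E0 : forall i, 0 <= E i.
  move=> i; rewrite /E divr_ge0 // ?ltW //.
  exact: lt_le_trans (d'pos i) (d'le i).
have sumE : \sum_i \det A / d 0 i * M i i = a ^+ n * \sum_i E i.
  rewrite mulr_sumr; apply: eq_bigr => i _.
  by rewrite /E Ea mulrAC mulrA.
have prodE : (b / a) ^+ n <= \prod_i E i.
  rewrite expr_div_n Eb Ea /E prodf_div -detA.
  rewrite ler_pM2r ?invr_gt0; last by rewrite detA prodr_gt0.
  rewrite -detM detM'; apply: ler_prod => i _.
  by rewrite (ltW (d'pos i)) d'le.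
have AGM := (leif_AGM (A := predT) (fun i _ => E0 i)).1.
rewrite cardT size_enum_ord in AGM.
have AGM2 : (b / a) ^+ n <= ((\sum_i E i) / n%:R) ^+ n.
  apply: (le_trans prodE); apply: (le_trans _ AGM).
  by rewrite le_eqVlt; apply/orP; left; apply/eqP; apply: eq_bigl => i.
rewrite sumE.
have ba : b / a <= (\sum_i E i) / n%:R.
  have H1 : b / a \is Num.nneg by rewrite nnegrE divr_ge0 // ltW.
  have H2 : (\sum_i E i) / n%:R \is Num.nneg.
    by rewrite nnegrE divr_ge0 // sumr_ge0.
  by rewrite -(ler_pXn2r n0 H1 H2).
have nR : (n%:R : R) != 0 by rewrite pnatr_eq0 -lt0n.
have -> : n%:R * a ^+ n.-1 * b = n%:R * a ^+ n * (b / a).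
  have an : a ^+ n = a ^+ n.-1 * a by rewrite -exprSr prednK.
  rewrite an -!mulrA; congr (_ * (_ * _)).
  by rewrite mulrCA divff ?gt_eqF // mulr1.
have -> : a ^+ n * \sum_i E i = n%:R * a ^+ n * ((\sum_i E i) / n%:R).
  by rewrite [n%:R * a ^+ n]mulrC -mulrA [n%:R * _]mulrCA divff // mulr1.
apply: ler_wpM2l => //.
by rewrite mulr_ge0 // exprn_ge0 // ltW.
Qed.

Lemma sqnorm_gt0 (R : realType) (n : nat) (xi : 'rV[R]_n) : xi != 0 -> 0 < sqnorm xi.
Proof.
move=> xi0; rewrite /sqnorm lt_def sumr_ge0 ?andbT; last by move=> i _; apply: sqr_ge0.
apply/eqP => /psumr_eq0P H; move/eqP: xi0; apply; apply/rowP => i.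
have := H (fun i _ => sqr_ge0 _) i isT; rewrite mxE => /eqP.
by rewrite sqrf_eq0 => /eqP.
Qed.

Lemma hess_sym (R : realType) (n : nat) (f : 'rV[R]_n -> R) (y : 'rV[R]_n) :
  C2 f -> (hessian f y)^T = hessian f y.
Proof.
move=> [d1 [d2 c2]]; apply/matrixP => i j; rewrite !mxE.
apply: (clairaut_gen _ _ f y (basis_vec i) (basis_vec j)) => //.
- by move=> z; apply: d2.
- by move=> z; apply: d2.
- exact: c2.
- exact: c2.
Qed.

Lemma tr_adj {R : realFieldType} {n : nat} (A B : 'M[R]_n) :
  \tr (\adj A *m B) = \sum_i \sum_j cofactor A i j * B i j.
Proof.
rewrite exchange_big; apply: eq_bigr => i _; rewrite mxE.
by apply: eq_bigr => j _; rewrite mxE.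
Qed.

Lemma pd_det_gt0 {R : realFieldType} {n : nat} (A : 'M[R]_n) :
  A^T = A -> pdmx A -> 0 < \det A.
Proof.
move=> sA pA; have [L [d [dL dpos _ EA]]] := LDL A sA pA.
by rewrite EA !det_mulmx det_tr dL mul1r mulr1 det_diag prodr_gt0.
Qed.

Lemma hess_incr (R : realType) (n : nat) (v : 'rV[R]_n -> R) (s : R) (e x : 'rV[R]_n) :
  C2 v -> hessian (incr s e v) x =
  (powR (enorm e) (2 * s))^-1 *: (hessian v (x + e) + hessian v (x - e) - 2 *: hessian v x).
Proof.
move=> [d1 [d2 c2]].
have E0 : incr s e v = comb (powR (enorm e) (2 * s)) e v by [].
apply/matrixP => i j; rewrite !mxE E0.
have -> : partial (comb (powR (enorm e) (2 * s)) e v) j =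
          comb (powR (enorm e) (2 * s)) e (partial v j).
  apply/funext => y; rewrite /partial.
  by have [_ ->] := derive_comb _ _ (powR (enorm e) (2 * s)) e v y (basis_vec j) (fun z => d1 z j).
rewrite /partial; have [_ ->] := derive_comb _ _ (powR (enorm e) (2 * s)) e (partial v j) x (basis_vec i) (fun z => d2 z i j).
by rewrite /comb mulrC.
Qed.

Lemma powR_n (R : realType) (n : nat) (D : R) : (0 < n)%N -> 0 <= D ->
  powR D n%:R^-1 ^+ n = D.
Proof.
move=> n0 D0; rewrite -powR_mulrn ?powR_ge0 // -powRrM mulVf ?powRr1 //.
by rewrite pnatr_eq0 -lt0n.
Qed.

Lemma powR_nm1 (R : realType) (n : nat) (D : R) : (0 < n)%N -> 0 <= D ->
  powR D ((n%:R - 1) / n%:R) = powR D n%:R^-1 ^+ n.-1.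
Proof.
move=> n0 D0; rewrite -powR_mulrn ?powR_ge0 // -powRrM.
have E : (n%:R - 1 : R) = n.-1%:R by rewrite -{1}(prednK n0) -natr1 addrK.
by rewrite E mulrC.
Qed.


Lemma tr_lin {R : realFieldType} {n : nat} (A Bp Bm : 'M[R]_n) (k : R) :
  \tr (\adj A *m (k *: (Bp + Bm - 2 *: A))) =
  k * (\tr (\adj A *m Bp) + \tr (\adj A *m Bm) - 2 * (\det A *+ n)).
Proof.
rewrite -scalemxAr mxtraceZ mulmxBr mulmxDr -scalemxAr raddfB /= mxtraceD mxtraceZ.
by rewrite mul_adj_mx mxtrace_scalar.
Qed.

Lemma final_alg {R : realFieldType} (n : nat) (a bp bm c Tp Tm : R) : (0 < n)%N -> 0 <= c ->
  n%:R * a ^+ n.-1 * bp <= Tp -> n%:R * a ^+ n.-1 * bm <= Tm ->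
  n%:R * a ^+ n.-1 * ((bp + bm - 2 * a) / c) <= c^-1 * (Tp + Tm - 2 * (a ^+ n *+ n)).
Proof.
move=> n0 c0 Kp Km.
have an : a ^+ n = a ^+ n.-1 * a by rewrite -exprSr prednK.
rewrite an.
have -> : n%:R * a ^+ n.-1 * ((bp + bm - 2 * a) / c) =
   c^-1 * (n%:R * a ^+ n.-1 * bp + n%:R * a ^+ n.-1 * bm - 2 * (a ^+ n.-1 * a *+ n)).
  rewrite -mulr_natl; ring.
apply: ler_wpM2l; first by rewrite invr_ge0.
by apply: lerB => //; apply: lerD.
Qed.

Theorem lemma3p1 (R : realType) (n : nat) (alpha d0 c0 theta c1 c2 : R)
    (fp f u : 'rV[R]_n -> R) (T : 'M[R]_n) :
  (0 < n)%N ->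
  0 < alpha < 1 ->
  (* f_p : positive, bounded, C^alpha, Z^n-periodic *)
  (forall x, d0^-1 <= fp x <= d0) ->
  (forall x y, `|fp x - fp y| <= d0 * powR (enorm (x - y)) alpha) ->
  (forall x i, fp (x + basis_vec i) = fp x) ->
  (* f in C^alpha(R^n), a perturbation of f_p decaying at infinity *)
  (exists C, forall x y, `|f x - f y| <= C * powR (enorm (x - y)) alpha) ->
  (forall eps, 0 < eps -> exists R0, forall x, R0 < enorm x -> `|f x - fp x| <= eps) ->
  (* u convex, C^{2,alpha}_loc, solution of det D^2 u = f *)
  (forall x y (t : R), 0 <= t <= 1 ->
      u ((1 - t) *: x + t *: y) <= (1 - t) * u x + t * u y) ->
  C2 u ->
  (forall r, 0 < r -> exists C, forall x y i j, enorm x <= r -> enorm y <= r ->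
      `|hessian u x i j - hessian u y i j| <= C * powR (enorm (x - y)) alpha) ->
  (forall x, \det (hessian u x) = f x) ->
  (* T linear, det T = 1, asymptotics of u(Tx) *)
  \det T = 1 ->
  (forall x, 1 <= enorm x ->
      `|u (x *m T) - 2^-1 * enorm x ^+ 2| <= c0 * powR (enorm x) (2 - theta)) ->
  (* v = u o T : det D^2 v = f_T, v in C^2, c1 I <= D^2 v <= c2 I *)
  let v := fun x => u (x *m T) in
  let fT := fun x => f (x *m T) in
  (forall x, \det (hessian v x) = fT x) ->
  C2 v ->
  0 < c1 -> 0 < c2 ->
  (forall x xi, c1 * sqnorm xi <= qform (hessian v x) xi <= c2 * sqnorm xi) ->
  forall s : R, 0 < s < alpha / 2 ->
  forall (x : 'rV[R]_n) (e : 'rV[R]_n), lattice T e -> e != 0 ->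
    \sum_i \sum_j cofactor (hessian v x) i j * hessian (incr s e v) x i j
    >= n%:R * powR (\det (hessian v x)) ((n%:R - 1) / n%:R)
       * ((powR (fT (x + e)) n%:R^-1 + powR (fT (x - e)) n%:R^-1
           - 2 * powR (fT x) n%:R^-1) / powR (enorm e) (2 * s)).
Proof.
move=> n0 _ _ _ _ _ _ _ _ _ _ _ _ v fT hv C2v c1p _ hq s _ x e _ _.
have pdH : forall y, pdmx (hessian v y).
  move=> y xi xi0; apply: (lt_le_trans (mulr_gt0 c1p (sqnorm_gt0 _ _ xi xi0))).
  by have /andP[] := hq y xi.
have symH : forall y, (hessian v y)^T = hessian v y.
  by move=> y; apply: hess_sym.
have fTpos : forall y, 0 < fT y.
  by move=> y; rewrite -hv; apply: pd_det_gt0.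
rewrite -tr_adj hess_incr //.
set A := hessian v x; set Bp := hessian v (x + e); set Bm := hessian v (x - e).
set c := powR (enorm e) (2 * s).
rewrite (tr_lin A Bp Bm c^-1).
set a := powR (fT x) n%:R^-1.
set bp := powR (fT (x + e)) n%:R^-1.
set bm := powR (fT (x - e)) n%:R^-1.
have a0 : 0 < a by rewrite powR_gt0.
have Ea : a ^+ n = \det A by rewrite /A hv powR_n // ltW.
have Ebp : bp ^+ n = \det Bp by rewrite /Bp hv powR_n // ltW.
have Ebm : bm ^+ n = \det Bm by rewrite /Bm hv powR_n // ltW.
have Kp := key_ineq A Bp a bp n0 (symH x) (symH _) (pdH x) (pdH _) a0 (powR_ge0 _ _) Ea Ebp.
have Km := key_ineq A Bm a bm n0 (symH x) (symH _) (pdH x) (pdH _) a0 (powR_ge0 _ _) Ea Ebm.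
have dA : \det A = fT x := hv x.
rewrite dA powR_nm1 //; last exact: ltW.
have Ea2 : fT x = a ^+ n by rewrite powR_n // ltW.
rewrite -/a [in X in _ <= X]Ea2.
have F := final_alg n a bp bm (powR (enorm e) (2 * s)) _ _ n0 (powR_ge0 _ _) Kp Km.
exact: F.
Qed.
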